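(* Let $p\ge2$ be an integer and let $G$ be a graph. If $G=H\cup I$ where $H$ is a subgraph of $G$ and $I$ is an induced subgraph of $G$ (so $V(G)=V(H)\cup V(I)$ and $E(G)=E(H)\cup E(I)$), then $\mathrm{id}^{\leq p}(G)\leq \mathrm{id}^{\leq p}(H)+\mathrm{id}^{\leq p}(I)$.
   Context: All graphs are finite and simple. For an oriented graph $D$ and $X\subseteq V(D)$, the inversion of $X$ reverses every arc with both endvertices in $X$; a $(\leq p)$-inversion is the inversion of a set of at most $p$ vertices. $\mathrm{id}^{\leq p}(G)$ is the maximum, over all ordered pairs $(\vec G_1,\vec G_2)$ of orientations of $G$, of the minimum number of $(\leq p)$-inversions transforming $\vec G_1$ into $\vec G_2$. *)

(* Defs.v *)
From mathcomp Require Import all_boot.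
From Stdlib Require Import ClassicalEpsilon.
Set Implicit Arguments. Unset Strict Implicit. Unset Printing Implicit Defensive.

Section Inversions.
Variable T : finType.

(* An oriented graph on (a subset of) T is encoded by its arc indicator:
   o (x, y) = true iff there is an arc x -> y. *)
Definition arcs := {ffun T * T -> bool}.

Definition is_orientation (e : rel T) (o : arcs) : bool :=
  [forall x, forall y, (o (x, y) ==> e x y) && (e x y ==> (o (x, y) != o (y, x)))].

Definition invert (X : {set T}) (o : arcs) : arcs :=
  [ffun xy : T * T => if (xy.1 \in X) && (xy.2 \in X) then o (xy.2, xy.1) else o xy].

Definition apply_inversions (s : seq {set T}) (o : arcs) : arcs :=
  foldl (fun o X => invert X o) o s.

Definition transformable (p : nat) (V : {set T}) (o1 o2 : arcs) (k : nat) : bool :=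
  [exists s : k.-tuple {set T},
     all (fun X : {set T} => (X \subset V) && (#|X| <= p)) s
     && (apply_inversions s o1 == o2)].

(* minimum number of (<= p)-inversions transforming o1 into o2
   (0 by convention if impossible; never happens for p >= 2) *)
Definition inv_dist (p : nat) (V : {set T}) (o1 o2 : arcs) : nat :=
  match excluded_middle_informative (exists k, transformable p V o1 o2 k) with
  | left h => ex_minn h
  | right _ => 0
  end.

Definition inv_diam (p : nat) (V : {set T}) (e : rel T) : nat :=
  \max_(o1 | is_orientation e o1) \max_(o2 | is_orientation e o2) inv_dist p V o1 o2.

End Inversions.

(* Main.v *)
Require Import Defs.
From mathcomp Require Import all_boot.
From Stdlib Require Import ClassicalEpsilon.
Set Implicit Arguments. Unset Strict Implicit. Unset Printing Implicit Defensive.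

Section Aux.
Variable T : finType.
Implicit Types (o : arcs T) (X : {set T}) (s : seq {set T}).

Lemma invertE X o a b : invert X o (a,b) =
  if (a \in X) && (b \in X) then o (b,a) else o (a,b).
Proof. by rewrite ffunE. Qed.

Lemma orientP (e' : rel T) o : reflect (forall x y, (o (x,y) -> e' x y) /\
   (e' x y -> o (x,y) != o (y,x))) (is_orientation e' o).
Proof.
apply: (iffP forallP) => [h x y | h x].
  by have /forallP/(_ y)/andP[/implyP ? /implyP ?] := h x.
apply/forallP => y; have [h1 h2] := h x y; apply/andP; split; exact/implyP.
Qed.

Lemma invert_orient (e' : rel T) X o : symmetric e' -> is_orientation e' o ->
  is_orientation e' (invert X o).
Proof.
move=> se /orientP h; apply/orientP => x y; rewrite !invertE [(y \in X) && _]andbC.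
case: ifP => _; last exact: h.
have [h1 h2] := h y x; rewrite se in h1 h2; split => // /h2; by rewrite eq_sym.
Qed.

Lemma apply_cons X s o : apply_inversions (X :: s) o = apply_inversions s (invert X o).
Proof. by []. Qed.

Lemma apply_cat s1 s2 o : apply_inversions (s1 ++ s2) o =
  apply_inversions s2 (apply_inversions s1 o).
Proof. by rewrite /apply_inversions foldl_cat. Qed.

Lemma apply_orient (e' : rel T) s o : symmetric e' -> is_orientation e' o ->
  is_orientation e' (apply_inversions s o).
Proof.
elim: s o => // X s IH o se ho; rewrite apply_cons; apply: IH => //.
exact: invert_orient.
Qed.

Lemma apply_out p (W : {set T}) s o a b :
  all (fun X => (X \subset W) && (#|X| <= p)) s -> ~~ ((a \in W) && (b \in W)) ->
  apply_inversions s o (a,b) = o (a,b).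
Proof.
elim: s o => // X s IH o /andP[/andP[sXW _] hs] hab; rewrite apply_cons IH // invertE.
case: ifP => // /andP[aX bX].
by rewrite (subsetP sXW _ aX) (subsetP sXW _ bX) in hab.
Qed.

Definition restr (e' : rel T) o : arcs T := [ffun xy => o xy && e' xy.1 xy.2].

Lemma restr_invert (e' : rel T) X o : symmetric e' ->
  restr e' (invert X o) = invert X (restr e' o).
Proof.
move=> se; apply/ffunP => [[a b]]; rewrite !ffunE /=.
by case: ifP => //= _; rewrite se.
Qed.

Lemma restr_apply (e' : rel T) s o : symmetric e' ->
  restr e' (apply_inversions s o) = apply_inversions s (restr e' o).
Proof.
elim: s o => // X s IH o se; by rewrite !apply_cons IH // restr_invert.
Qed.

Lemma restr_orient (e e' : rel T) o : symmetric e' -> (forall x y, e' x y -> e x y) ->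
  is_orientation e o -> is_orientation e' (restr e' o).
Proof.
move=> se sub /orientP h; apply/orientP => x y; rewrite !ffunE /=; split.
  by case/andP.
move=> exy; rewrite (se y x) exy !andbT.
have [_ h2] := h x y; exact: h2 (sub _ _ exy).
Qed.

Lemma transP p (V : {set T}) o1 o2 k : reflect (exists s, [/\ size s = k,
   all (fun X => (X \subset V) && (#|X| <= p)) s & apply_inversions s o1 = o2])
  (transformable p V o1 o2 k).
Proof.
apply: (iffP existsP) => [[s /andP[h1 /eqP h2]] | [s [hs h1 h2]]].
  by exists (tval s); rewrite size_tuple.
subst k; exists (in_tuple s); by rewrite h1 h2 eqxx.
Qed.

Lemma inv_dist_le p (V : {set T}) o1 o2 k : transformable p V o1 o2 k -> inv_dist p V o1 o2 <= k.
Proof.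
move=> h; rewrite /inv_dist; case: excluded_middle_informative => [ex|n].
  by case: ex_minnP => m _ hm; exact: hm.
by exfalso; apply: n; exists k.
Qed.

Lemma inv_dist_tr p (V : {set T}) o1 o2 : (exists k, transformable p V o1 o2 k) ->
  transformable p V o1 o2 (inv_dist p V o1 o2).
Proof.
move=> ex; rewrite /inv_dist; case: excluded_middle_informative => [ex'|n].
  by case: ex_minnP.
by exfalso; apply: n.
Qed.

Lemma base_eq (e' : rel T) o1 o2 : is_orientation e' o1 -> is_orientation e' o2 ->
  [set xy | o1 xy && o2 (xy.2, xy.1)] = set0 -> o1 = o2.
Proof.
move=> /orientP h1 /orientP h2 E; apply/ffunP => [[a b]].
have nd c d : o1 (c,d) && o2 (d,c) = false.
  by have := in_set0 (c,d); rewrite -E inE.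
have [h1a h1b] := h1 a b; have [h2a h2b] := h2 a b.
move: h1a h1b h2a h2b (nd a b) (nd b a).
case: (o1 (a,b)); case: (o1 (b,a)); case: (o2 (a,b)); case: (o2 (b,a));
  case: (e' a b) => //= A B C D;
  by [move: (B isT) | move: (D isT) | move: (A isT) | move: (C isT)].
Qed.

Lemma exists_tr p (V : {set T}) (e' : rel T) o1 o2 : 2 <= p -> symmetric e' ->
  (forall x y, e' x y -> (x \in V) && (y \in V)) ->
  is_orientation e' o1 -> is_orientation e' o2 ->
  exists k, transformable p V o1 o2 k.
Proof.
move=> p2 se inV ho1 ho2.
suff H : forall n o1, is_orientation e' o1 ->
    #|[set xy | o1 xy && o2 (xy.2, xy.1)]| <= n ->
    exists s, all (fun X => (X \subset V) && (#|X| <= p)) s && (apply_inversions s o1 == o2).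
  have [s /andP[hs /eqP he]] := H _ o1 ho1 (leqnn _).
  by exists (size s); apply/transP; exists s.
elim=> [|n IH] o hoo hn.
  exists [::] => /=; apply/eqP; apply: (base_eq hoo ho2).
  by apply/eqP; rewrite -cards_eq0 -leqn0.
have [E|[[x y] xyin]] := set_0Vmem [set xy | o xy && o2 (xy.2, xy.1)].
  by exists [::] => /=; apply/eqP; apply: (base_eq hoo ho2).
move: (xyin); rewrite inE /= => /andP[oxy o2yx].
have /orientP h1 := hoo; have /orientP h2 := ho2.
have exy : e' x y by case: (h1 x y) => + _; apply.
have o1yx : o (y,x) = false by case: (h1 x y) => _ /(_ exy); rewrite oxy; case: (o (y,x)).
have o2xy : o2 (x,y) = false by case: (h2 x y) => _ /(_ exy); rewrite o2yx; case: (o2 (x,y)).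
have xny : x != y.
  by apply/eqP => exy'; subst y; rewrite oxy in o1yx.
have hoi := invert_orient [set x; y] se hoo.
have sub : [set xy | invert [set x; y] o xy && o2 (xy.2, xy.1)] \subset
           [set xy | o xy && o2 (xy.2, xy.1)] :\ (x,y).
  apply/subsetP => [[a b]]; rewrite !inE /= invertE !inE xpair_eqE.
  case: ifP => [/andP[aX bX] | nX].
    move=> /andP[o1ba o2ba].
    case/orP: aX => /eqP ea; case/orP: bX => /eqP eb; subst a b.
    - by rewrite eqxx /= o1ba o2ba (negbTE xny).
    - by rewrite o1yx in o1ba.
    - by rewrite o2xy in o2ba.
    - by rewrite o1ba o2ba eqxx andbT eq_sym xny.
  move=> ->; rewrite andbT; apply/negP => /andP[/eqP ea /eqP eb]; subst a b.
  by rewrite !eqxx /= orbT in nX.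
have hn' : #|[set xy | o xy && o2 (xy.2, xy.1)] :\ (x,y)| <= n.
  by move: hn; rewrite (cardsD1 (x,y)) xyin add1n ltnS.
have [s /andP[hs /eqP he]] := IH _ hoi (leq_trans (subset_leq_card sub) hn').
exists ([set x; y] :: s); rewrite /= hs he eqxx !andbT.
apply/andP; split.
  apply/subsetP => z; rewrite !inE => /orP[]/eqP->; by case/andP: (inV _ _ exy).
by rewrite cards2; apply: leq_trans p2; case: (x != y).
Qed.

End Aux.

Theorem mainTheorem12 (T : finType) (e : rel T) (p : nat)
    (VH : {set T}) (eH : rel T) (VI : {set T}) :
  2 <= p ->
  symmetric e -> irreflexive e ->
  symmetric eH ->
  (forall x y, eH x y -> e x y) ->
  (forall x y, eH x y -> (x \in VH) && (y \in VH)) ->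
  VH :|: VI = [set: T] ->
  (forall x y, e x y -> eH x y || ((x \in VI) && (y \in VI))) ->
  inv_diam p [set: T] e <=
    inv_diam p VH eH + inv_diam p VI (fun x y => [&& e x y, x \in VI & y \in VI]).
Proof.
move=> p2 se ie seH subH inVH VHI cover.
set eI := fun x y => [&& e x y, x \in VI & y \in VI].
have seI : symmetric eI.
  by move=> x y; rewrite /eI se; congr andb; rewrite andbC.
have subI : forall x y, eI x y -> e x y by move=> x y /andP[].
have inVI : forall x y, eI x y -> (x \in VI) && (y \in VI) by move=> x y /and3P[_ -> ->].
rewrite {1}/inv_diam; apply/bigmax_leqP => o1 ho1; apply/bigmax_leqP => o2 ho2.
have hH1 := restr_orient seH subH ho1; have hH2 := restr_orient seH subH ho2.
have /transP [sH [szH allH eqH]] := inv_dist_tr (exists_tr p2 seH inVH hH1 hH2).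
set o1' := apply_inversions sH o1.
have ho1' : is_orientation e o1' by apply: apply_orient.
have hI1 := restr_orient seI subI ho1'; have hI2 := restr_orient seI subI ho2.
have /transP [sI [szI allI eqI]] := inv_dist_tr (exists_tr p2 seI inVI hI1 hI2).
have lH : inv_dist p VH (restr eH o1) (restr eH o2) <= inv_diam p VH eH.
  apply: leq_trans (leq_bigmax_cond (restr eH o1) hH1).
  exact: (leq_bigmax_cond (F := fun o => inv_dist p VH (restr eH o1) o)).
have lI : inv_dist p VI (restr eI o1') (restr eI o2) <= inv_diam p VI eI.
  apply: leq_trans (leq_bigmax_cond (restr eI o1') hI1).
  exact: (leq_bigmax_cond (F := fun o => inv_dist p VI (restr eI o1') o)).
apply: leq_trans (leq_add lH lI); rewrite -szH -szI -size_cat.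
apply: inv_dist_le; apply/transP; exists (sH ++ sI); split => //.
  rewrite all_cat; apply/andP; split; apply: sub_all (allH) || apply: sub_all (allI);
    by move=> X /andP[_ ->]; rewrite subsetT.
rewrite apply_cat -/o1'.
have EH : restr eH o1' = restr eH o2 by rewrite restr_apply.
have EI : restr eI (apply_inversions sI o1') = restr eI o2 by rewrite restr_apply.
have ho3 : is_orientation e (apply_inversions sI o1') by apply: apply_orient.
move/orientP: ho3 => h3; move/orientP: (ho2) => h2.
apply/ffunP => [[a b]].
case Eab: (e a b); last first.
  case: (h3 a b) => + _; case: (h2 a b) => + _; rewrite Eab.
  case: (apply_inversions sI o1' (a,b)); case: (o2 (a,b)) => // A B;
  by [move: (A isT) | move: (B isT)].
case hab: ((a \in VI) && (b \in VI)).
  have := congr1 (fun f : arcs T => f (a,b)) EI; rewrite !ffunE /= /eI hab Eab !andbT.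
  by [].
rewrite (apply_out _ allI) ?hab //.
have eHab : eH a b by move: (cover a b Eab); rewrite hab orbF.
have := congr1 (fun f : arcs T => f (a,b)) EH; rewrite !ffunE /= eHab !andbT.
by [].
Qed.
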